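(* Consider the system of ordinary differential equations for $(x(t),h(t),n(t))$: \[ \frac{dx}{dt} = x(1-x)S(h) + \mu(h)(1-x) - \nu x,\qquad \frac{dh}{dt} = \alpha n(1+\beta x)\,G(h) - \Gamma(n)(h-1),\qquad \frac{dn}{dt} = r n(1-n) - D(h,x)\,n, \] where \[ S(h) = \frac{s_0}{1+e^{-\lambda(h-h_c)}} - c + \varphi\, d_S(h),\quad d_S(h) = \frac{d_{\max} h^m}{h_{50}^m + h^m},\quad \mu(h)=\mu_0 h^p, \] \[ G(h) = \frac{K_g}{K_g+h},\quad \Gamma(n) = \frac{\gamma_0}{1+\eta n},\quad D(h,x) = (1-\varphi x)\,d_S(h), \] and all parameters $s_0,\lambda,h_c,c,\varphi,d_{\max},h_{50},m,\mu_0,p,\nu,\alpha,\beta,K_g,\gamma_0,\eta,r$ are positive, with $\varphi\le 1$. Let $\mathcal{D} = [0,1]\times(0,\infty)\times[0,1]$. Then for every initial condition $(x_0,h_0,n_0)\in\mathcal{D}$ the system admits a unique solution $(x(t),h(t),n(t))$ defined for all $t\ge 0$, and this solution remains in $\mathcal{D}$ for all $t\ge 0$.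
   Context: The model describes a tumor: $x$ is the fraction of acid-resistant cells, $h$ is the proton concentration normalized by its physiological value (so $h=1$ is physiological pH), and $n$ is tumor density normalized by carrying capacity. *)

(* Defs.v *)
From Stdlib Require Import Reals.
Open Scope R_scope.

Record params := Params {
  s0 : R; lam : R; hc : R; c : R; phi : R; dmax : R; h50 : R; m : R;
  mu0 : R; p : R; nu : R; alpha : R; beta : R; Kg : R; gamma0 : R;
  eta : R; r : R }.

Definition params_ok (P : params) : Prop :=
  0 < s0 P /\ 0 < lam P /\ 0 < hc P /\ 0 < c P /\ 0 < phi P /\ phi P <= 1 /\
  0 < dmax P /\ 0 < h50 P /\ 0 < m P /\ 0 < mu0 P /\ 0 < p P /\ 0 < nu P /\
  0 < alpha P /\ 0 < beta P /\ 0 < Kg P /\ 0 < gamma0 P /\ 0 < eta P /\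
  0 < r P.

(* h^m for real exponent, h > 0: Rpower h m = exp (m ln h). *)
Definition dS (P : params) (h : R) : R :=
  dmax P * Rpower h (m P) / (Rpower (h50 P) (m P) + Rpower h (m P)).
Definition Sfun (P : params) (h : R) : R :=
  s0 P / (1 + exp (- (lam P * (h - hc P)))) - c P + phi P * dS P h.
Definition mu (P : params) (h : R) : R := mu0 P * Rpower h (p P).
Definition Gfun (P : params) (h : R) : R := Kg P / (Kg P + h).
Definition Gam (P : params) (n : R) : R := gamma0 P / (1 + eta P * n).
Definition Dfun (P : params) (h x : R) : R := (1 - phi P * x) * dS P h.

Definition Fx (P : params) (x h n : R) : R :=
  x * (1 - x) * Sfun P h + mu P h * (1 - x) - nu P * x.
Definition Fh (P : params) (x h n : R) : R :=
  alpha P * n * (1 + beta P * x) * Gfun P h - Gam P n * (h - 1).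
Definition Fn (P : params) (x h n : R) : R :=
  r P * n * (1 - n) - Dfun P h x * n.

Definition right_cont0 (f : R -> R) : Prop :=
  forall eps, 0 < eps -> exists delta, 0 < delta /\
    forall t, 0 <= t < delta -> Rabs (f t - f 0) < eps.

(* A (classical) solution on [0, +oo): continuous on [0,oo), differentiable on
   (0,oo) satisfying the ODE there, with h > 0 (the natural domain of the
   vector field, since h^p, h^m with real exponents need h > 0). *)
Definition is_solution (P : params) (x h n : R -> R) : Prop :=
  (forall t, 0 <= t -> 0 < h t) /\
  right_cont0 x /\ right_cont0 h /\ right_cont0 n /\
  (forall t, 0 < t ->
     derivable_pt_lim x t (Fx P (x t) (h t) (n t)) /\
     derivable_pt_lim h t (Fh P (x t) (h t) (n t)) /\
     derivable_pt_lim n t (Fn P (x t) (h t) (n t))).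

Definition inD (x h n : R) : Prop := 0 <= x <= 1 /\ 0 < h /\ 0 <= n <= 1.

(* Main.v *)
Require Import Defs.
From Stdlib Require Import Reals.
Open Scope R_scope.
From Stdlib Require Import Lra Psatz ZArith.
From Coquelicot Require Import Coquelicot.
Open Scope R_scope.

Definition Lipf (f : R -> R) (K : R) := forall s t, Rabs (f t - f s) <= K * Rabs (t - s).

Lemma lip_cont_pt f K : Lipf f K -> forall x, continuity_pt f x.
Proof.
  intros H x. unfold continuity_pt, continue_in, limit1_in, limit_in. simpl. unfold R_dist.
  intros eps Heps. exists (eps / (Rabs K + 1)). split.
  - apply Rdiv_lt_0_compat; [lra| pose proof (Rabs_pos K); lra].
  - intros y [_ Hy]. specialize (H x y).
    assert (HK: 0 < Rabs K + 1) by (pose proof (Rabs_pos K); lra).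
    assert (K * Rabs (y - x) <= Rabs K * Rabs (y - x)).
    { apply Rmult_le_compat_r; [apply Rabs_pos| apply RRle_abs]. }
    assert (Rabs K * Rabs (y - x) <= Rabs K * (eps / (Rabs K + 1))).
    { apply Rmult_le_compat_l; [apply Rabs_pos| lra]. }
    assert (Rabs K * (eps / (Rabs K + 1)) < eps).
    { apply Rmult_lt_reg_r with (Rabs K + 1); [lra|].
      field_simplify; [|lra]. nra. }
    lra.
Qed.

Lemma lip_cont f K : Lipf f K -> forall x, continuous f x.
Proof. intros H x. apply continuity_pt_filterlim. eapply lip_cont_pt; eauto. Qed.

Lemma lip_rc0 f K : Lipf f K -> right_cont0 f.
Proof.
  intros H eps Heps. exists (eps / (Rabs K + 1)).
  assert (HK: 0 < Rabs K + 1) by (pose proof (Rabs_pos K); lra).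
  split. apply Rdiv_lt_0_compat; lra.
  intros t [Ht1 Ht2]. specialize (H 0 t).
  assert (K * Rabs (t - 0) <= Rabs K * Rabs (t - 0)).
  { apply Rmult_le_compat_r; [apply Rabs_pos| apply RRle_abs]. }
  rewrite Rminus_0_r in *. rewrite (Rabs_right t) in * by lra.
  assert (Rabs K * t <= Rabs K * (eps / (Rabs K + 1))).
  { apply Rmult_le_compat_l; [apply Rabs_pos| lra]. }
  assert (Rabs K * (eps / (Rabs K + 1)) < eps).
  { apply Rmult_lt_reg_r with (Rabs K + 1); [lra|].
    field_simplify; [|lra]. nra. }
  lra.
Qed.

Lemma rc0_iff f : right_cont0 f <-> continuity_pt (fun t => f (Rmax 0 t)) 0.
Proof.
  split.
  - intros H. unfold continuity_pt, continue_in, limit1_in, limit_in. simpl. unfold R_dist.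
    intros eps Heps. destruct (H eps Heps) as [d [Hd Hf]]. exists d. split; [lra|].
    intros t [_ Ht]. rewrite (Rmax_left 0 0) by lra.
    destruct (Rle_dec 0 t).
    + rewrite Rmax_right by lra. apply Hf. rewrite Rminus_0_r in Ht.
      rewrite Rabs_right in Ht by lra. lra.
    + rewrite Rmax_left by lra. rewrite Rminus_diag, Rabs_R0. lra.
  - intros H eps Heps. destruct (H eps Heps) as [d [Hd Hf]]. exists d. split; [lra|].
    intros t [Ht1 Ht2].
    destruct (Req_dec t 0) as [->|Hn].
    + rewrite Rminus_diag, Rabs_R0. lra.
    + specialize (Hf t). simpl in Hf. unfold R_dist in Hf.
      rewrite (Rmax_left 0 0) in Hf by lra. rewrite Rmax_right in Hf by lra.
      apply Hf. split. split; [exact I| congruence]. rewrite Rminus_0_r, Rabs_right; lra.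
Qed.

Lemma rc0_of_cont f : continuity_pt f 0 -> right_cont0 f.
Proof.
  intros H eps Heps. destruct (H eps Heps) as [d [Hd Hf]]. exists d. split; [lra|].
  intros t [Ht1 Ht2].
  destruct (Req_dec t 0) as [->|Hn].
  + rewrite Rminus_diag, Rabs_R0. lra.
  + apply Hf. split. split; [exact I| congruence]. simpl; unfold R_dist.
    rewrite Rminus_0_r, Rabs_right; lra.
Qed.

Lemma rc0_plus f g : right_cont0 f -> right_cont0 g -> right_cont0 (fun t => f t + g t).
Proof.
  rewrite !rc0_iff. intros.
  apply (continuity_pt_plus (fun t => f (Rmax 0 t)) (fun t => g (Rmax 0 t))); auto.
Qed.
Lemma rc0_minus f g : right_cont0 f -> right_cont0 g -> right_cont0 (fun t => f t - g t).
Proof.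
  rewrite !rc0_iff. intros.
  apply (continuity_pt_minus (fun t => f (Rmax 0 t)) (fun t => g (Rmax 0 t))); auto.
Qed.
Lemma rc0_mult f g : right_cont0 f -> right_cont0 g -> right_cont0 (fun t => f t * g t).
Proof.
  rewrite !rc0_iff. intros.
  apply (continuity_pt_mult (fun t => f (Rmax 0 t)) (fun t => g (Rmax 0 t))); auto.
Qed.
Lemma rc0_comp q f : right_cont0 f -> continuity_pt q (f 0) -> right_cont0 (fun t => q (f t)).
Proof.
  rewrite !rc0_iff. intros H1 H2.
  apply (continuity_pt_comp (fun t => f (Rmax 0 t)) q); auto.
  rewrite Rmax_left by lra. auto.
Qed.

Lemma mono_lemma g dg T : 0 <= T -> right_cont0 g ->
  (forall t, 0 < t -> derivable_pt_lim g t (dg t)) ->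
  (forall t, 0 < t <= T -> dg t <= 0) -> g T <= g 0.
Proof.
  intros HT Hrc Hd Hneg.
  destruct (Rle_dec (g T) (g 0)) as [|Hc]; [auto|exfalso].
  assert (HT0 : 0 < T).
  { destruct HT as [|<-]; auto. lra. }
  destruct (Hrc (g T - g 0)) as [d [Hd0 Hdd]]; [lra|].
  set (e := Rmin (d/2) (T/2)).
  assert (He : 0 < e /\ e < d /\ e < T).
  { unfold e; split; [apply Rmin_pos; lra|]. split.
    - apply Rle_lt_trans with (d/2); [apply Rmin_l| lra].
    - apply Rle_lt_trans with (T/2); [apply Rmin_r| lra]. }
  destruct (MVT_gen g e T dg) as [c [Hc1 Hc2]].
  - intros x Hx. rewrite Rmin_left, Rmax_right in Hx by lra.
    apply is_derive_Reals. apply Hd. lra.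
  - intros x Hx. rewrite Rmin_left, Rmax_right in Hx by lra.
    apply derivable_continuous_pt. exists (dg x). apply Hd. lra.
  - rewrite Rmin_left, Rmax_right in Hc1 by lra.
    assert (dg c <= 0) by (apply Hneg; lra).
    assert (dg c * (T - e) <= 0).
    { apply Rmult_le_0_r; lra. }
    specialize (Hdd e ltac:(lra)).
    apply Rabs_def2 in Hdd. lra.
Qed.

Lemma deriv_quad q dq K u :
  (forall h, Rabs (q (u + h) - q u - dq * h) <= K * (h * h)) -> derivable_pt_lim q u dq.
Proof.
  intros H eps Heps.
  exists (mkposreal (eps / (Rabs K + 1)) ltac:(apply Rdiv_lt_0_compat; [lra| pose proof (Rabs_pos K); lra])).
  intros h Hh0 Hh. simpl in Hh.
  assert (HK: 0 < Rabs K + 1) by (pose proof (Rabs_pos K); lra).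
  specialize (H h).
  replace ((q (u + h) - q u) / h - dq) with ((q (u + h) - q u - dq * h) / h) by (field; auto).
  unfold Rdiv. rewrite Rabs_mult, Rabs_inv.
  assert (Hhp: 0 < Rabs h) by (apply Rabs_pos_lt; auto).
  apply Rmult_lt_reg_r with (Rabs h); [auto|].
  rewrite Rmult_assoc, Rinv_l by lra. rewrite Rmult_1_r.
  assert (K * (h * h) <= Rabs K * (Rabs h * Rabs h)).
  { rewrite <- Rabs_mult. replace (Rabs (h*h)) with (h*h).
    apply Rmult_le_compat_r; [nra| apply RRle_abs].
    rewrite Rabs_right; nra. }
  assert (Rabs K * (Rabs h * Rabs h) < eps * Rabs h).
  { assert (Rabs K * Rabs h < eps).
    { apply Rle_lt_trans with (Rabs K * (eps / (Rabs K + 1))).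
      apply Rmult_le_compat_l; [apply Rabs_pos| lra].
      apply Rmult_lt_reg_r with (Rabs K + 1); [lra|].
      field_simplify; [|lra]. nra. }
    nra. }
  lra.
Qed.

Definition q0 (u : R) := Rmin u 0 * Rmin u 0.

Lemma q0_der u : derivable_pt_lim q0 u (2 * Rmin u 0).
Proof.
  apply deriv_quad with (K := 1). intros h. unfold q0.
  unfold Rmin; destruct (Rle_dec (u+h) 0); destruct (Rle_dec u 0);
  apply Rabs_le; split; nra.
Qed.

Lemma q0_cont u : continuity_pt q0 u.
Proof. apply derivable_continuous_pt. exists (2 * Rmin u 0). apply q0_der. Qed.

Lemma inv_lo y dy lo : right_cont0 y -> lo <= y 0 ->
  (forall t, 0 < t -> derivable_pt_lim y t (dy t)) ->
  (forall t, 0 < t -> y t < lo -> 0 <= dy t) ->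
  forall t, 0 <= t -> lo <= y t.
Proof.
  intros Hrc H0 Hd Hs t Ht.
  assert (Hm := mono_lemma (fun s => q0 (y s - lo)) (fun s => 2 * Rmin (y s - lo) 0 * dy s) t Ht).
  assert (Hle : q0 (y t - lo) <= q0 (y 0 - lo)).
  { apply Hm.
    - apply rc0_comp with (q := q0). apply rc0_minus; auto. intros e He; exists 1; split; [lra|]; intros; rewrite Rminus_diag, Rabs_R0; lra.
      apply q0_cont.
    - intros s Hs0. 
      apply (derivable_pt_lim_comp (fun s => y s - lo) q0 s (dy s) (2 * Rmin (y s - lo) 0)) .
      + replace (dy s) with (dy s - 0) by ring. apply derivable_pt_lim_minus; auto. apply derivable_pt_lim_const.
      + apply q0_der.
    - intros s [Hs1 Hs2]. unfold Rmin. destruct (Rle_dec (y s - lo) 0).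
      + destruct (Req_dec (y s - lo) 0) as [E|E]. rewrite E. lra.
        assert (0 <= dy s) by (apply Hs; lra). nra.
      + lra. }
  unfold q0 in Hle. rewrite (Rmin_right (y 0 - lo)) in Hle by lra.
  destruct (Rle_dec lo (y t)); auto.
  rewrite Rmin_left in Hle by lra. nra.
Qed.

Lemma inv_hi y dy hi : right_cont0 y -> y 0 <= hi ->
  (forall t, 0 < t -> derivable_pt_lim y t (dy t)) ->
  (forall t, 0 < t -> hi < y t -> dy t <= 0) ->
  forall t, 0 <= t -> y t <= hi.
Proof.
  intros Hrc H0 Hd Hs t Ht.
  assert (- hi <= - y t); [|lra].
  apply (inv_lo (fun s => - y s) (fun s => - dy s) (-hi)); auto.
  - assert (Hr := rc0_minus (fun _ => 0) y). 
    intros e He. destruct Hr with e as [d Hdd]; auto.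
    intros e' He'; exists 1; split; [lra|]; intros; rewrite Rminus_diag, Rabs_R0; lra.
    exists d. split; [apply Hdd|]. intros s Hs'. destruct Hdd as [_ Hdd]. specialize (Hdd s Hs').
    replace (- y s - - y 0) with (0 - y s - (0 - y 0)) by ring. auto.
  - lra.
  - intros s Hs0. apply derivable_pt_lim_opp with (f := y). auto.
  - intros s Hs0 Hl. assert (dy s <= 0) by (apply Hs; lra). lra.
Qed.
Definition qr (rho u : R) := 2 * rho * Rmin u rho - Rmin u rho * Rmin u rho.

Lemma qr_der rho u : derivable_pt_lim (qr rho) u (2 * Rmax (rho - u) 0).
Proof.
  apply deriv_quad with (K := 1). intros h. unfold qr.
  unfold Rmin, Rmax; destruct (Rle_dec (u+h) rho); destruct (Rle_dec u rho);
  destruct (Rle_dec (rho - u) 0);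
  apply Rabs_le; split; nra.
Qed.

Lemma qr_cont rho u : continuity_pt (qr rho) u.
Proof. apply derivable_continuous_pt. exists (2 * Rmax (rho - u) 0). apply qr_der. Qed.

Lemma exp_le a b : a <= b -> exp a <= exp b.
Proof. intros [H| ->]; [left; apply exp_increasing; auto| lra]. Qed.

Lemma two_pow_pos k : 0 < 2 ^ k.
Proof. apply pow_lt; lra. Qed.

Lemma two_pow_ge k : INR k <= 2 ^ k.
Proof.
  induction k. simpl; lra. rewrite S_INR. simpl.
  assert (1 <= 2 ^ k) by (apply pow_R1_Rle; lra). lra.
Qed.

Lemma two_pow_unb K : exists k, K < 2 ^ k.
Proof.
  destruct (archimed K) as [H _].
  destruct (Rle_dec (IZR (up K)) 0).
  - exists 0%nat. simpl. lra.
  - exists (Z.to_nat (up K)). eapply Rlt_le_trans; [|apply two_pow_ge].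
    rewrite INR_IZR_INZ, Z2Nat.id. lra. apply le_IZR. lra.
Qed.

Lemma small_pow K eps : 0 < eps -> exists k, K / 2 ^ k < eps.
Proof.
  intros He. destruct (two_pow_unb (K / eps)) as [k Hk]. exists k.
  assert (P := two_pow_pos k).
  apply Rmult_lt_reg_r with (2 ^ k); auto. unfold Rdiv. rewrite Rmult_assoc, Rinv_l by lra.
  apply Rmult_lt_reg_r with (/ eps). apply Rinv_0_lt_compat; auto.
  replace (eps * 2 ^ k * / eps) with (2 ^ k) by (field; lra). lra.
Qed.

Lemma zero_of_pow a K : (forall k, Rabs a <= K / 2 ^ k) -> a = 0.
Proof.
  intros H. destruct (Req_dec a 0); auto. exfalso.
  destruct (small_pow K (Rabs a)) as [k Hk]. apply Rabs_pos_lt; auto.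
  specialize (H k). lra.
Qed.

Lemma lim_bound u (a c B : R) k : is_lim_seq u a -> (forall j, (k <= j)%nat -> Rabs (u j - c) <= B) ->
  Rabs (a - c) <= B.
Proof.
  intros Hl Hb. destruct (Rle_dec (Rabs (a - c)) B) as [|Hn]; auto. exfalso.
  apply is_lim_seq_spec in Hl. 
  destruct (Hl (mkposreal (Rabs (a - c) - B) ltac:(lra))) as [N HN]. simpl in HN.
  specialize (HN (max N k) (Nat.le_max_l _ _)). specialize (Hb (max N k) (Nat.le_max_r _ _)).
  assert (Rabs (a - c) <= Rabs (u (max N k) - a) + Rabs (u (max N k) - c)).
  { replace (a - c) with (-(u (max N k) - a) + (u (max N k) - c)) by ring.
    eapply Rle_trans; [apply Rabs_triang|]. rewrite Rabs_Ropp. lra. }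
  lra.
Qed.

Lemma Rmax0_lip s t : Rabs (Rmax 0 t - Rmax 0 s) <= Rabs (t - s).
Proof.
  unfold Rmax. destruct (Rle_dec 0 t); destruct (Rle_dec 0 s); apply Rabs_le;
  split; unfold Rabs; destruct (Rcase_abs (t - s)); lra.
Qed.

Lemma RInt_diff_bound (f1 f0 h : R -> R) t : 0 <= t -> ex_RInt f1 0 t -> ex_RInt f0 0 t -> ex_RInt h 0 t ->
  (forall s, 0 <= s <= t -> Rabs (f1 s - f0 s) <= h s) ->
  Rabs (RInt f1 0 t - RInt f0 0 t) <= RInt h 0 t.
Proof.
  intros Ht E1 E0 Eh Hb.
  assert (A1 : RInt f1 0 t <= RInt (fun s => f0 s + h s) 0 t).
  { apply RInt_le; auto. apply (ex_RInt_plus f0 h); auto.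
    intros s Hs. specialize (Hb s ltac:(lra)). apply Rabs_le_between in Hb. lra. }
  assert (A0 : RInt f0 0 t <= RInt (fun s => f1 s + h s) 0 t).
  { apply RInt_le; auto. apply (ex_RInt_plus f1 h); auto.
    intros s Hs. specialize (Hb s ltac:(lra)). apply Rabs_le_between in Hb. lra. }
  assert (P1 : RInt (fun s => f0 s + h s) 0 t = RInt f0 0 t + RInt h 0 t) by exact (RInt_plus f0 h 0 t E0 Eh).
  assert (P0 : RInt (fun s => f1 s + h s) 0 t = RInt f1 0 t + RInt h 0 t) by exact (RInt_plus f1 h 0 t E1 Eh).
  apply Rabs_le. lra.
Qed.

Lemma RInt_exp A kap t : 0 < kap -> RInt (fun s => A * exp (kap * s)) 0 t = A * (exp (kap * t) - 1) / kap.
Proof.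
  intros Hk. apply is_RInt_unique.
  replace (A * (exp (kap * t) - 1) / kap) with (minus (A * exp (kap * t) / kap) (A * exp (kap * 0) / kap)).
  2:{ rewrite Rmult_0_r, exp_0. unfold minus, plus, opp; simpl. field. lra. }
  apply (is_RInt_derive (fun s => A * exp (kap * s) / kap)).
  - intros x _. auto_derive; auto. field. lra.
  - intros x _. apply continuity_pt_filterlim.
    apply derivable_continuous_pt. exists (A * (kap * exp (kap * x))).
    apply is_derive_Reals. auto_derive; auto. ring.
Qed.

Lemma ex_RInt_lip f K a b : Lipf f K -> ex_RInt f a b.
Proof. intros H. apply (@ex_RInt_continuous R_CompleteNormedModule). intros z _. eapply lip_cont; eauto. Qed.

Lemma RInt_lipf f K B : Lipf f K -> (forall s, Rabs (f s) <= B) -> Lipf (fun t => RInt f 0 t) B.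
Proof.
  intros Hl Hb s t.
  assert (E : RInt f 0 s + RInt f s t = RInt f 0 t) by exact (RInt_Chasles f 0 s t (ex_RInt_lip f K 0 s Hl) (ex_RInt_lip f K s t Hl)).
  replace (RInt f 0 t - RInt f 0 s) with (RInt f s t) by lra.
  assert (Rabs (RInt f s t) <= Rabs (t - s) * B).
  { exact (norm_RInt_le_const_abs f s t (RInt f s t) B (fun x _ => Hb x) (RInt_correct f s t (ex_RInt_lip f K s t Hl))). }
  lra.
Qed.

Section Picard.
Variable G : nat -> R -> R -> R -> R.
Variables L M : R.
Variable y0 : nat -> R.
Hypothesis HL : 0 < L.
Hypothesis HM : 0 <= M.
Hypothesis Glip : forall i a b c a' b' c', Rabs (G i a b c - G i a' b' c') <= L * (Rabs (a - a') + Rabs (b - b') + Rabs (c - c')).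
Hypothesis Gbd : forall i a b c, Rabs (G i a b c) <= M.

Definition gY (Y : nat -> R -> R) i s := G i (Y 0%nat s) (Y 1%nat s) (Y 2%nat s).

Fixpoint pic (k : nat) : nat -> R -> R :=
  match k with O => fun i _ => y0 i | S k' => fun i t => y0 i + RInt (gY (pic k') i) 0 t end.

Lemma gY_lip Y K : (forall j, Lipf (Y j) K) -> forall i, Lipf (gY Y i) (L * (3 * K)).
Proof.
  intros H i s t. unfold gY. eapply Rle_trans; [apply Glip|].
  rewrite Rmult_assoc. apply Rmult_le_compat_l; [lra|].
  pose proof (H 0%nat s t). pose proof (H 1%nat s t). pose proof (H 2%nat s t). lra.
Qed.

Lemma pic_lip k : forall i, Lipf (pic k i) M.
Proof.
  induction k; intros i s t; simpl.
  - rewrite Rminus_diag, Rabs_R0. pose proof (Rabs_pos (t - s)). nra.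
  - replace (y0 i + RInt (gY (pic k) i) 0 t - (y0 i + RInt (gY (pic k) i) 0 s))
      with (RInt (gY (pic k) i) 0 t - RInt (gY (pic k) i) 0 s) by ring.
    apply (RInt_lipf _ (L * (3 * M))). apply gY_lip; auto. intros; apply Gbd.
Qed.

Lemma pic_ex k i a b : ex_RInt (gY (pic k) i) a b.
Proof. apply (ex_RInt_lip _ (L * (3 * M))). apply gY_lip. apply pic_lip. Qed.

Definition dst (Y Z : nat -> R -> R) t :=
  Rabs (Y 0%nat t - Z 0%nat t) + Rabs (Y 1%nat t - Z 1%nat t) + Rabs (Y 2%nat t - Z 2%nat t).

Definition kap := 6 * L.
Definition C0 := 3 * M / kap.

Lemma kap_pos : 0 < kap. Proof. unfold kap; lra. Qed.
Lemma C0_nonneg : 0 <= C0.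
Proof. unfold C0. apply Rmult_le_pos. lra. left; apply Rinv_0_lt_compat, kap_pos. Qed.

Lemma gY_diff Y Z i s : Rabs (gY Y i s - gY Z i s) <= L * dst Y Z s.
Proof. unfold gY, dst. apply Glip. Qed.

Lemma diff_bound k t : 0 <= t -> dst (pic (S k)) (pic k) t <= C0 * exp (kap * t) / 2 ^ k.
Proof.
  revert t. induction k; intros t Ht.
  - unfold dst. simpl.
    assert (B : forall i, Rabs (y0 i + RInt (gY (fun i _ => y0 i) i) 0 t - y0 i) <= M * t).
    { intros i. replace (y0 i + RInt (gY (fun i _ => y0 i) i) 0 t - y0 i) with
        (RInt (gY (pic 0) i) 0 t - RInt (gY (pic 0) i) 0 0).
      2:{ simpl. rewrite RInt_point. simpl. unfold zero; simpl. ring. }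
      eapply Rle_trans. apply (RInt_lipf _ (L * (3 * M))). apply gY_lip; apply pic_lip. intros; apply Gbd.
      rewrite Rminus_0_r, Rabs_right by lra. lra. }
    pose proof (B 0%nat). pose proof (B 1%nat). pose proof (B 2%nat).
    assert (3 * M * t <= C0 * exp (kap * t)).
    { pose proof (exp_ineq1_le (kap * t)). pose proof kap_pos.
      unfold C0. replace (3 * M * t) with (3 * M / kap * (kap * t)) by (field; lra).
      apply Rmult_le_compat_l. apply C0_nonneg. lra. }
    lra.
  - assert (B : forall i, Rabs (pic (S (S k)) i t - pic (S k) i t) <= L * C0 / 2 ^ k * (exp (kap * t) - 1) / kap).
    { intros i. change (pic (S (S k)) i t) with (y0 i + RInt (gY (pic (S k)) i) 0 t).
      change (pic (S k) i t) with (y0 i + RInt (gY (pic k) i) 0 t).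
      replace (y0 i + RInt (gY (pic (S k)) i) 0 t - (y0 i + RInt (gY (pic k) i) 0 t)) with
        (RInt (gY (pic (S k)) i) 0 t - RInt (gY (pic k) i) 0 t) by ring.
      rewrite <- (RInt_exp (L * C0 / 2 ^ k) kap t kap_pos).
      apply RInt_diff_bound; [lra|apply pic_ex|apply pic_ex| |].
      apply (@ex_RInt_continuous R_CompleteNormedModule). intros z _. apply continuity_pt_filterlim.
      apply derivable_continuous_pt. exists (L * C0 / 2 ^ k * (kap * exp (kap * z))).
      apply is_derive_Reals. auto_derive; auto. ring.
      intros s Hs. eapply Rle_trans. apply gY_diff.
      specialize (IHk s ltac:(lra)). unfold Rdiv in *. 
      replace (L * C0 * / 2 ^ k * exp (kap * s)) with (L * (C0 * exp (kap * s) * / 2 ^ k)) by ring.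
      apply Rmult_le_compat_l; lra. }
    unfold dst. pose proof (B 0%nat) as B0. pose proof (B 1%nat) as B1. pose proof (B 2%nat) as B2.
    assert (3 * (L * C0 / 2 ^ k * (exp (kap * t) - 1) / kap) <= C0 * exp (kap * t) / 2 ^ S k).
    { change (2 ^ S k) with (2 * 2 ^ k). unfold kap. pose proof (two_pow_pos k). pose proof C0_nonneg.
      replace (3 * (L * C0 / 2 ^ k * (exp (6 * L * t) - 1) / (6 * L))) with (C0 * (exp (6 * L * t) - 1) / (2 * 2 ^ k)) by (field; lra).
      unfold Rdiv. apply Rmult_le_compat_r. left; apply Rinv_0_lt_compat; lra.
      apply Rmult_le_compat_l; lra. }
    lra.
Qed.

Lemma comp_le_dst Y Z t i : (i <= 2)%nat -> Rabs (Y i t - Z i t) <= dst Y Z t.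
Proof.
  intros Hi. unfold dst.
  pose proof (Rabs_pos (Y 0%nat t - Z 0%nat t)). pose proof (Rabs_pos (Y 1%nat t - Z 1%nat t)).
  pose proof (Rabs_pos (Y 2%nat t - Z 2%nat t)).
  destruct i as [|[|[|i]]]; try lra. lia.
Qed.

Lemma cauchy_bound k m i t : (i <= 2)%nat -> 0 <= t ->
  Rabs (pic (k + m) i t - pic k i t) <= 2 * C0 * exp (kap * t) / 2 ^ k - 2 * C0 * exp (kap * t) / 2 ^ (k + m).
Proof.
  intros Hi Ht. induction m.
  - rewrite Nat.add_0_r, Rminus_diag, Rabs_R0. lra.
  - rewrite Nat.add_succ_r.
    assert (D := diff_bound (k + m) t Ht).
    assert (D' := comp_le_dst (pic (S (k + m))) (pic (k + m)) t i Hi).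
    assert (Rabs (pic (S (k + m)) i t - pic k i t) <= Rabs (pic (S (k + m)) i t - pic (k + m) i t) + Rabs (pic (k + m) i t - pic k i t)).
    { replace (pic (S (k + m)) i t - pic k i t) with ((pic (S (k + m)) i t - pic (k + m) i t) + (pic (k + m) i t - pic k i t)) by ring.
      apply Rabs_triang. }
    change (2 ^ S (k + m)) with (2 * 2 ^ (k + m)).
    assert (C0 * exp (kap * t) / 2 ^ (k + m) = 2 * C0 * exp (kap * t) / 2 ^ (k + m) - 2 * C0 * exp (kap * t) / (2 * 2 ^ (k + m))).
    { pose proof (two_pow_pos (k + m)). field. lra. }
    lra.
Qed.

Lemma cauchy_bound' j k i t : (i <= 2)%nat -> 0 <= t -> (k <= j)%nat ->
  Rabs (pic j i t - pic k i t) <= 2 * C0 * exp (kap * t) / 2 ^ k.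
Proof.
  intros Hi Ht Hkj. replace j with (k + (j - k))%nat by lia.
  eapply Rle_trans. apply cauchy_bound; auto.
  assert (0 <= 2 * C0 * exp (kap * t) / 2 ^ (k + (j - k))).
  { pose proof C0_nonneg. pose proof (exp_pos (kap * t)). pose proof (two_pow_pos (k + (j-k))).
    unfold Rdiv. apply Rmult_le_pos. nra. left; apply Rinv_0_lt_compat; auto. }
  lra.
Qed.

Definition Ylim i t := real (Lim_seq (fun k => pic k i (Rmax 0 t))).

Lemma Ylim_lim i t : (i <= 2)%nat -> is_lim_seq (fun k => pic k i (Rmax 0 t)) (Ylim i t).
Proof.
  intros Hi. unfold Ylim. apply Lim_seq_correct'. apply ex_lim_seq_cauchy_corr.
  intros eps. set (t' := Rmax 0 t). assert (Ht : 0 <= t') by apply Rmax_l.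
  destruct (small_pow (4 * C0 * exp (kap * t')) eps) as [N HN]. apply cond_pos.
  exists N. intros n m Hn Hm.
  pose proof (cauchy_bound' n N i t' Hi Ht Hn). pose proof (cauchy_bound' m N i t' Hi Ht Hm).
  replace (pic n i t' - pic m i t') with ((pic n i t' - pic N i t') - (pic m i t' - pic N i t')) by ring.
  eapply Rle_lt_trans. apply Rabs_triang. rewrite Rabs_Ropp.
  replace (4 * C0 * exp (kap * t') / 2 ^ N) with (2 * (2 * C0 * exp (kap * t') / 2 ^ N)) in HN by (unfold Rdiv; ring).
  lra.
Qed.

Lemma Ylim_bound k i t : (i <= 2)%nat -> 0 <= t -> Rabs (Ylim i t - pic k i t) <= 2 * C0 * exp (kap * t) / 2 ^ k.
Proof.
  intros Hi Ht. assert (HL' := Ylim_lim i t Hi). rewrite Rmax_right in HL' by lra.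
  apply (lim_bound _ _ _ _ k HL'). intros j Hj. apply cauchy_bound'; auto.
Qed.

Lemma Ylim_lip i : (i <= 2)%nat -> Lipf (Ylim i) M.
Proof.
  intros Hi s t.
  assert (H := is_lim_seq_minus' _ _ _ _ (Ylim_lim i t Hi) (Ylim_lim i s Hi)).
  replace (Ylim i t - Ylim i s) with (Ylim i t - Ylim i s - 0) by ring.
  apply (lim_bound _ _ _ _ 0 H). intros j _. rewrite Rminus_0_r.
  eapply Rle_trans. apply pic_lip. apply Rmult_le_compat_l; auto. apply Rmax0_lip.
Qed.

Definition Y3 i := Ylim (min i 2).

Lemma Y3_lip i : Lipf (Y3 i) M.
Proof. apply Ylim_lip. lia. Qed.

Lemma gY3_lip i : Lipf (gY Y3 i) (L * (3 * M)).
Proof. apply gY_lip. apply Y3_lip. Qed.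

Lemma Y3_int i t : (i <= 2)%nat -> 0 <= t -> Y3 i t = y0 i + RInt (gY Y3 i) 0 t.
Proof.
  intros Hi Ht.
  set (E := C0 * exp (kap * t)).
  assert (HE : 0 <= E) by (unfold E; pose proof C0_nonneg; pose proof (exp_pos (kap*t)); nra).
  apply Rminus_diag_uniq. apply (zero_of_pow _ (2 * E + t * (L * (3 * (2 * E))))).
  intros k.
  assert (A1 : Rabs (Y3 i t - pic (S k) i t) <= 2 * E / 2 ^ k).
  { unfold Y3. rewrite Nat.min_l by lia. eapply Rle_trans. apply Ylim_bound; auto.
    change (2 ^ S k) with (2 * 2 ^ k). pose proof (two_pow_pos k). fold E.
    replace (2 * C0 * exp (kap * t) / (2 * 2 ^ k)) with (E / 2 ^ k) by (unfold E; field; lra).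
    unfold Rdiv. apply Rmult_le_compat_r. left; apply Rinv_0_lt_compat; lra. lra. }
  assert (A2 : Rabs (RInt (gY (pic k) i) 0 t - RInt (gY Y3 i) 0 t) <= t * (L * (3 * (2 * E / 2 ^ k)))).
  { replace (t * (L * (3 * (2 * E / 2 ^ k)))) with (RInt (fun _ => L * (3 * (2 * E / 2 ^ k))) 0 t).
    2:{ rewrite (RInt_const 0 t (L * (3 * (2 * E / 2 ^ k)))). unfold scal; simpl. unfold mult; simpl. ring. }

    apply RInt_diff_bound; [lra|apply pic_ex| apply (ex_RInt_lip _ _ _ _ (gY3_lip i))| apply ex_RInt_const|].
    intros s Hs. eapply Rle_trans. apply gY_diff. apply Rmult_le_compat_l; [lra|].
    unfold dst.
    assert (forall j, (j <= 2)%nat -> Rabs (pic k j s - Y3 j s) <= 2 * E / 2 ^ k).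
    { intros j Hj. unfold Y3. rewrite Nat.min_l by lia. rewrite <- Rabs_Ropp.
      replace (- (pic k j s - Ylim j s)) with (Ylim j s - pic k j s) by ring.
      eapply Rle_trans. apply Ylim_bound; auto. lra.
      unfold E, Rdiv. apply Rmult_le_compat_r. left; apply Rinv_0_lt_compat, two_pow_pos.
      replace (2 * (C0 * exp (kap * t))) with (2 * C0 * exp (kap * t)) by ring.
      apply Rmult_le_compat_l. pose proof C0_nonneg; lra.
      apply exp_le. pose proof kap_pos. nra. }
    pose proof (H 0%nat ltac:(lia)). pose proof (H 1%nat ltac:(lia)). pose proof (H 2%nat ltac:(lia)). lra. }
  change (pic (S k) i t) with (y0 i + RInt (gY (pic k) i) 0 t) in A1.
  replace (Y3 i t - (y0 i + RInt (gY Y3 i) 0 t)) with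
    ((Y3 i t - (y0 i + RInt (gY (pic k) i) 0 t)) + (RInt (gY (pic k) i) 0 t - RInt (gY Y3 i) 0 t)) by ring.
  eapply Rle_trans. apply Rabs_triang.
  replace ((2 * E + t * (L * (3 * (2 * E)))) / 2 ^ k) with (2 * E / 2 ^ k + t * (L * (3 * (2 * E / 2 ^ k)))).
  lra. unfold Rdiv. ring.
Qed.

Lemma Y3_der i t : (i <= 2)%nat -> 0 < t -> derivable_pt_lim (Y3 i) t (gY Y3 i t).
Proof.
  intros Hi Ht.
  assert (D : is_derive (fun b => Y3 i b - y0 i) t (gY Y3 i t)).
  { apply (is_derive_RInt (gY Y3 i) (fun b => Y3 i b - y0 i) 0 t).
    - exists (mkposreal t Ht). intros b Hb. 
      assert (Hb0 : 0 < b).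
      { unfold ball in Hb; simpl in Hb. unfold AbsRing_ball, abs, minus, plus, opp in Hb; simpl in Hb.
        apply Rabs_def2 in Hb. lra. }
      assert (Heq : Y3 i b - y0 i = RInt (gY Y3 i) 0 b).
      { rewrite (Y3_int i b Hi) by lra. ring. }
      simpl. rewrite Heq.
      apply (RInt_correct (gY Y3 i)). apply (ex_RInt_lip _ _ _ _ (gY3_lip i)).
    - apply (lip_cont _ _ (gY3_lip i)). }
  apply is_derive_Reals in D.
  assert (D2 := derivable_pt_lim_plus _ _ t _ _ D (derivable_pt_lim_const (y0 i) t)).
  rewrite Rplus_0_r in D2.
  intros eps He. destruct (D2 eps He) as [d Hd]. exists d. intros h Hh0 Hh.
  specialize (Hd h Hh0 Hh). unfold plus_fct, fct_cte in Hd.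
  replace (Y3 i (t + h) - y0 i + y0 i) with (Y3 i (t + h)) in Hd by ring.
  replace (Y3 i t - y0 i + y0 i) with (Y3 i t) in Hd by ring. auto.
Qed.

Lemma picard_exists : exists Y : nat -> R -> R,
  (forall i, (i <= 2)%nat -> Y i 0 = y0 i) /\ (forall i, Lipf (Y i) M) /\
  (forall i t, (i <= 2)%nat -> 0 < t -> derivable_pt_lim (Y i) t (gY Y i t)).
Proof.
  exists Y3. split; [|split].
  - intros i Hi. rewrite (Y3_int i 0 Hi) by lra. rewrite RInt_point. unfold zero; simpl. ring.
  - apply Y3_lip.
  - apply Y3_der.
Qed.

End Picard.

Record box := mkbox { bxl : R; bxu : R; bhl : R; bhu : R; bnl : R; bnu : R }.
Definition inB (b : box) x h n :=
  bxl b <= x <= bxu b /\ bhl b <= h <= bhu b /\ bnl b <= n <= bnu b.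
Definition dist3 x h n x' h' n' := Rabs (x - x') + Rabs (h - h') + Rabs (n - n').

Definition LB (b : box) (f : R -> R -> R -> R) :=
  exists K B, 0 <= K /\ 0 <= B /\ forall x h n x' h' n', inB b x h n -> inB b x' h' n' ->
    Rabs (f x h n) <= B /\ Rabs (f x h n - f x' h' n') <= K * dist3 x h n x' h' n'.

Lemma dist3_pos x h n x' h' n' : 0 <= dist3 x h n x' h' n'.
Proof. unfold dist3. pose proof (Rabs_pos (x-x')). pose proof (Rabs_pos (h-h')). pose proof (Rabs_pos (n-n')). lra. Qed.

Lemma abs_between a lo hi : lo <= a <= hi -> Rabs a <= Rabs lo + Rabs hi.
Proof.
  intros [H1 H2]. pose proof (Rabs_pos lo). pose proof (Rabs_pos hi).
  pose proof (RRle_abs hi). pose proof (RRle_abs (- lo)). rewrite Rabs_Ropp in *.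
  apply Rabs_le. lra.
Qed.

Lemma abs_le_inv a B : Rabs a <= B -> - B <= a <= B.
Proof. unfold Rabs; destruct (Rcase_abs a); intros; lra. Qed.

Lemma LB_const b c : LB b (fun _ _ _ => c).
Proof.
  exists 0, (Rabs c). split; [lra|]. split; [apply Rabs_pos|]. intros. split; [lra|].
  rewrite Rminus_diag, Rabs_R0, Rmult_0_l. lra.
Qed.

Lemma LB_x b : LB b (fun x _ _ => x).
Proof.
  exists 1, (Rabs (bxl b) + Rabs (bxu b)). split; [lra|]. split.
  pose proof (Rabs_pos (bxl b)); pose proof (Rabs_pos (bxu b)); lra.
  intros x h n x' h' n' [Hx _] _. split. apply abs_between; auto.
  unfold dist3. pose proof (Rabs_pos (h-h')). pose proof (Rabs_pos (n-n')). lra.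
Qed.
Lemma LB_h b : LB b (fun _ h _ => h).
Proof.
  exists 1, (Rabs (bhl b) + Rabs (bhu b)). split; [lra|]. split.
  pose proof (Rabs_pos (bhl b)); pose proof (Rabs_pos (bhu b)); lra.
  intros x h n x' h' n' [_ [Hh _]] _. split. apply abs_between; auto.
  unfold dist3. pose proof (Rabs_pos (x-x')). pose proof (Rabs_pos (n-n')). lra.
Qed.
Lemma LB_n b : LB b (fun _ _ n => n).
Proof.
  exists 1, (Rabs (bnl b) + Rabs (bnu b)). split; [lra|]. split.
  pose proof (Rabs_pos (bnl b)); pose proof (Rabs_pos (bnu b)); lra.
  intros x h n x' h' n' [_ [_ Hn]] _. split. apply abs_between; auto.
  unfold dist3. pose proof (Rabs_pos (x-x')). pose proof (Rabs_pos (h-h')). lra.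
Qed.

Lemma LB_plus b f g : LB b f -> LB b g -> LB b (fun x h n => f x h n + g x h n).
Proof.
  intros [K1 [B1 [HK1 [HB1 H1]]]] [K2 [B2 [HK2 [HB2 H2]]]].
  exists (K1 + K2), (B1 + B2). split; [lra|]. split; [lra|].
  intros x h n x' h' n' Hi Hi'. destruct (H1 _ _ _ _ _ _ Hi Hi') as [A1 A2].
  destruct (H2 _ _ _ _ _ _ Hi Hi') as [A3 A4]. split.
  - eapply Rle_trans; [apply Rabs_triang|]. lra.
  - replace (f x h n + g x h n - (f x' h' n' + g x' h' n')) with ((f x h n - f x' h' n') + (g x h n - g x' h' n')) by ring.
    eapply Rle_trans; [apply Rabs_triang|]. lra.
Qed.

Lemma LB_opp b f : LB b f -> LB b (fun x h n => - f x h n).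
Proof.
  intros [K1 [B1 [HK1 [HB1 H1]]]]. exists K1, B1. split; [lra|]. split; [lra|].
  intros x h n x' h' n' Hi Hi'. destruct (H1 _ _ _ _ _ _ Hi Hi') as [A1 A2].
  rewrite Rabs_Ropp. split; auto.
  replace (- f x h n - - f x' h' n') with (- (f x h n - f x' h' n')) by ring. rewrite Rabs_Ropp. auto.
Qed.

Lemma LB_minus b f g : LB b f -> LB b g -> LB b (fun x h n => f x h n - g x h n).
Proof. intros. apply (LB_plus b f (fun x h n => - g x h n)); auto. apply LB_opp; auto. Qed.

Lemma LB_mult b f g : LB b f -> LB b g -> LB b (fun x h n => f x h n * g x h n).
Proof.
  intros [K1 [B1 [HK1 [HB1 H1]]]] [K2 [B2 [HK2 [HB2 H2]]]].
  exists (B1 * K2 + B2 * K1), (B1 * B2). split; [nra|]. split; [nra|].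
  intros x h n x' h' n' Hi Hi'. destruct (H1 _ _ _ _ _ _ Hi Hi') as [A1 A2].
  destruct (H2 _ _ _ _ _ _ Hi Hi') as [A3 A4].
  destruct (H1 _ _ _ _ _ _ Hi' Hi') as [A5 _]. destruct (H2 _ _ _ _ _ _ Hi' Hi') as [A6 _].
  pose proof (dist3_pos x h n x' h' n').
  split.
  - rewrite Rabs_mult. apply Rmult_le_compat; auto; apply Rabs_pos.
  - replace (f x h n * g x h n - f x' h' n' * g x' h' n') with
      (f x h n * (g x h n - g x' h' n') + g x' h' n' * (f x h n - f x' h' n')) by ring.
    eapply Rle_trans; [apply Rabs_triang|]. rewrite !Rabs_mult.
    assert (Rabs (f x h n) * Rabs (g x h n - g x' h' n') <= B1 * (K2 * dist3 x h n x' h' n')).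
    { apply Rmult_le_compat; auto; apply Rabs_pos. }
    assert (Rabs (g x' h' n') * Rabs (f x h n - f x' h' n') <= B2 * (K1 * dist3 x h n x' h' n')).
    { apply Rmult_le_compat; auto; apply Rabs_pos. }
    nra.
Qed.

Lemma LB_inv b f c : LB b f -> 0 < c -> (forall x h n, inB b x h n -> c <= f x h n) ->
  LB b (fun x h n => / f x h n).
Proof.
  intros [K1 [B1 [HK1 [HB1 H1]]]] Hc Hl.
  exists (K1 / (c * c)), (/ c). split. apply Rmult_le_pos; auto. left; apply Rinv_0_lt_compat; nra.
  split. left; apply Rinv_0_lt_compat; auto.
  intros x h n x' h' n' Hi Hi'. destruct (H1 _ _ _ _ _ _ Hi Hi') as [A1 A2].
  pose proof (Hl _ _ _ Hi) as L1. pose proof (Hl _ _ _ Hi') as L2.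
  split.
  - rewrite Rabs_inv, Rabs_right by lra. apply Rinv_le_contravar; lra.
  - replace (/ f x h n - / f x' h' n') with (- (f x h n - f x' h' n') * / (f x h n * f x' h' n')) by (field; lra).
    rewrite Rabs_mult, Rabs_Ropp, Rabs_inv, (Rabs_right (f x h n * f x' h' n')) by nra.
    unfold Rdiv. replace (K1 * / (c * c) * dist3 x h n x' h' n') with ((K1 * dist3 x h n x' h' n') * / (c * c)) by ring.
    apply Rmult_le_compat; auto. apply Rabs_pos. left; apply Rinv_0_lt_compat; nra.
    apply Rinv_le_contravar; nra.
Qed.

Lemma exp_lip u v B : Rabs u <= B -> Rabs v <= B -> Rabs (exp u - exp v) <= exp B * Rabs (u - v).
Proof.
  intros Hu Hv. apply abs_le_inv in Hu. apply abs_le_inv in Hv.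
  assert (forall a b, a <= b -> b <= B -> exp b - exp a <= exp B * (b - a)).
  { intros a c Hac HcB. pose proof (exp_ineq1_le (a - c)).
    assert (exp a = exp c * exp (a - c)) by (rewrite <- exp_plus; f_equal; ring).
    assert (exp c <= exp B) by (destruct HcB as [H'|H']; [left; apply exp_increasing; auto| rewrite H'; lra]).
    pose proof (exp_pos c). nra. }
  assert (exp_mono: forall a c, a <= c -> exp a <= exp c) by
    (intros a c [H'|H']; [left; apply exp_increasing; auto| rewrite H'; lra]).
  destruct (Rle_dec u v).
  - pose proof (H u v r ltac:(lra)). pose proof (exp_mono u v r).
    rewrite Rabs_left1 by lra. rewrite (Rabs_left1 (u - v)) by lra. lra.
  - pose proof (H v u ltac:(lra) ltac:(lra)). pose proof (exp_mono v u ltac:(lra)).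
    rewrite Rabs_right by lra. rewrite (Rabs_right (u - v)) by lra. lra.
Qed.

Lemma LB_exp b f : LB b f -> LB b (fun x h n => exp (f x h n)).
Proof.
  intros [K1 [B1 [HK1 [HB1 H1]]]].
  exists (exp B1 * K1), (exp B1). split. pose proof (exp_pos B1); nra. split. left; apply exp_pos.
  intros x h n x' h' n' Hi Hi'. destruct (H1 _ _ _ _ _ _ Hi Hi') as [A1 A2].
  destruct (H1 _ _ _ _ _ _ Hi' Hi') as [A3 _]. split.
  - rewrite Rabs_right by (left; apply exp_pos). apply abs_le_inv in A1.
    destruct (Req_dec (f x h n) B1) as [->|]; [lra|]. left; apply exp_increasing; lra.
  - eapply Rle_trans. apply exp_lip; eauto. rewrite Rmult_assoc. apply Rmult_le_compat_l; auto.
    left; apply exp_pos.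
Qed.

Lemma ln_le_sub1 u : 0 < u -> ln u <= u - 1.
Proof. intros H. pose proof (exp_ineq1_le (ln u)). rewrite exp_ln in H0; lra. Qed.

Lemma LB_ln b f c : LB b f -> 0 < c -> (forall x h n, inB b x h n -> c <= f x h n) ->
  LB b (fun x h n => ln (f x h n)).
Proof.
  intros [K1 [B1 [HK1 [HB1 H1]]]] Hc Hl.
  exists (K1 / c), (B1 + / c + 1). split. apply Rmult_le_pos; auto. left; apply Rinv_0_lt_compat; lra.
  split. pose proof (Rinv_0_lt_compat c Hc). lra.
  intros x h n x' h' n' Hi Hi'. destruct (H1 _ _ _ _ _ _ Hi Hi') as [A1 A2].
  pose proof (Hl _ _ _ Hi) as L1. pose proof (Hl _ _ _ Hi') as L2.
  assert (key : forall u v, c <= u -> c <= v -> ln u - ln v <= Rabs (u - v) / c).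
  { intros u v Hu Hv. replace (ln u - ln v) with (ln (u / v)).
    2:{ unfold Rdiv. rewrite ln_mult, ln_Rinv by (try apply Rinv_0_lt_compat; lra). ring. } eapply Rle_trans. apply ln_le_sub1.
    apply Rdiv_lt_0_compat; lra.
    replace (u / v - 1) with ((u - v) / v) by (field; lra).
    unfold Rdiv. eapply Rle_trans. apply Rmult_le_compat_r. left; apply Rinv_0_lt_compat; lra. apply RRle_abs.
    apply Rmult_le_compat_l. apply Rabs_pos. apply Rinv_le_contravar; lra. }
  split.
  - assert (E1 : ln (f x h n) <= f x h n - 1) by (apply ln_le_sub1; lra).
    assert (E2 : ln (/ f x h n) <= / f x h n - 1) by (apply ln_le_sub1; apply Rinv_0_lt_compat; lra).
    rewrite ln_Rinv in E2 by lra.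
    assert (/ f x h n <= / c) by (apply Rinv_le_contravar; lra).
    pose proof (Rinv_0_lt_compat c Hc).
    apply abs_le_inv in A1. apply Rabs_le. lra.
  - pose proof (key _ _ L1 L2) as E1. pose proof (key _ _ L2 L1) as E2.
    rewrite <- Rabs_Ropp in E2. replace (- (f x' h' n' - f x h n)) with (f x h n - f x' h' n') in E2 by ring.
    assert (Rabs (f x h n - f x' h' n') / c <= K1 / c * dist3 x h n x' h' n').
    { unfold Rdiv. replace (K1 * / c * dist3 x h n x' h' n') with (K1 * dist3 x h n x' h' n' * / c) by ring.
      apply Rmult_le_compat_r; auto. left; apply Rinv_0_lt_compat; lra. }
    apply Rabs_le. lra.
Qed.

Ltac lbt := repeat first [ apply LB_const | apply LB_x | apply LB_h | apply LB_n
  | apply LB_plus | apply LB_minus | apply LB_mult | apply LB_opp | apply LB_exp ].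

Lemma Rpower_pos a y : 0 < Rpower a y.
Proof. unfold Rpower. apply exp_pos. Qed.

Lemma LB_Rpower b a : 0 < bhl b -> LB b (fun _ h _ => Rpower h a).
Proof.
  intros Hb. unfold Rpower. apply LB_exp. apply LB_mult. apply LB_const.
  apply (LB_ln b (fun _ h _ => h) (bhl b)). apply LB_h. auto.
  intros x h n [_ [[H _] _]]. auto.
Qed.

Lemma LB_dS P b : params_ok P -> 0 < bhl b -> LB b (fun _ h _ => dS P h).
Proof.
  intros HP Hb. unfold dS, Rdiv. apply LB_mult. apply LB_mult. apply LB_const. apply LB_Rpower; auto.
  apply (LB_inv b _ (Rpower (h50 P) (m P))).
  apply LB_plus. apply LB_const. apply LB_Rpower; auto. apply Rpower_pos.
  intros. pose proof (Rpower_pos h (m P)). lra.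
Qed.

Lemma LB_Sfun P b : params_ok P -> 0 < bhl b -> LB b (fun _ h _ => Sfun P h).
Proof.
  intros HP Hb. unfold Sfun, Rdiv. apply LB_plus. apply LB_minus. apply LB_mult. apply LB_const.
  apply (LB_inv b _ 1). lbt. lra. intros. pose proof (exp_pos (- (lam P * (h - hc P)))). lra.
  apply LB_const. apply LB_mult. apply LB_const. apply LB_dS; auto.
Qed.

Lemma LB_mu P b : params_ok P -> 0 < bhl b -> LB b (fun _ h _ => mu P h).
Proof. intros HP Hb. unfold mu. apply LB_mult. apply LB_const. apply LB_Rpower; auto. Qed.

Lemma LB_Fx P b : params_ok P -> 0 < bhl b -> LB b (Fx P).
Proof.
  intros HP Hb. unfold Fx. apply LB_minus. apply LB_plus. apply LB_mult. lbt. apply LB_Sfun; auto.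
  apply LB_mult. apply LB_mu; auto. lbt. lbt.
Qed.

Lemma LB_Fh P b : params_ok P -> 0 < bhl b -> 0 < 1 + eta P * bnl b -> LB b (Fh P).
Proof.
  intros HP Hb Hn. destruct HP as [? [? [? [? [? [? [? [? [? [? [? [? [? [? [? [? [? ?]]]]]]]]]]]]]]]]].
  unfold Fh, Gfun, Gam, Rdiv. apply LB_minus. apply LB_mult. lbt.
  apply LB_mult. apply LB_const. apply (LB_inv b _ (Kg P + bhl b)). lbt. lra.
  intros x h n [_ [[H' _] _]]. lra.
  apply LB_mult. apply LB_mult. apply LB_const.
  apply (LB_inv b _ (1 + eta P * bnl b)). lbt. auto.
  intros x h n [_ [_ [H' _]]]. nra. lbt.
Qed.

Lemma LB_Fn P b : params_ok P -> 0 < bhl b -> LB b (Defs.Fn P).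
Proof.
  intros HP Hb. unfold Defs.Fn, Dfun. apply LB_minus. lbt. apply LB_mult. apply LB_mult. lbt.
  apply LB_dS; auto. lbt.
Qed.

Lemma dpl_mult f g t df dg : derivable_pt_lim f t df -> derivable_pt_lim g t dg ->
  derivable_pt_lim (fun s => f s * g s) t (df * g t + f t * dg).
Proof. intros. exact (derivable_pt_lim_mult f g t df dg H H0). Qed.
Lemma dpl_plus f g t df dg : derivable_pt_lim f t df -> derivable_pt_lim g t dg ->
  derivable_pt_lim (fun s => f s + g s) t (df + dg).
Proof. intros. exact (derivable_pt_lim_plus f g t df dg H H0). Qed.
Lemma dpl_minus f g t df dg : derivable_pt_lim f t df -> derivable_pt_lim g t dg ->
  derivable_pt_lim (fun s => f s - g s) t (df - dg).
Proof. intros. exact (derivable_pt_lim_minus f g t df dg H H0). Qed.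
Lemma dpl_comp q f t df dq : derivable_pt_lim f t df -> derivable_pt_lim q (f t) dq ->
  derivable_pt_lim (fun s => q (f s)) t (dq * df).
Proof. intros. exact (derivable_pt_lim_comp f q t df dq H H0). Qed.
Lemma dpl_eq f t l l' : derivable_pt_lim f t l -> l = l' -> derivable_pt_lim f t l'.
Proof. intros H ->. auto. Qed.
Lemma dpl_expk k t : derivable_pt_lim (fun s => exp (- (k * s))) t (- k * exp (- (k * t))).
Proof. apply is_derive_Reals. auto_derive; auto. ring. Qed.

Lemma rc0_const c : right_cont0 (fun _ => c).
Proof. intros e He; exists 1; split; [lra|]; intros; rewrite Rminus_diag, Rabs_R0; lra. Qed.

Lemma sq_small a d : 0 < d -> a * a < d * d -> Rabs a < d.
Proof.
  intros Hd H. destruct (Rlt_dec (Rabs a) d); auto. exfalso.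
  assert (Rabs a * Rabs a = a * a) by (rewrite <- Rabs_mult; apply Rabs_right; nra).
  nra.
Qed.

Lemma LB_lip b f : LB b f -> exists K, 0 <= K /\ forall x h n x' h' n', inB b x h n -> inB b x' h' n' ->
  Rabs (f x h n - f x' h' n') <= K * dist3 x h n x' h' n'.
Proof.
  intros [K [B [HK [HB H]]]]. exists K. split; auto. intros. apply H; auto.
Qed.

Lemma uniq_lemma P (X H N x' h' n' : R -> R) a bb :
  params_ok P -> 0 < a -> 
  (forall t, 0 <= t -> 0 <= X t <= 1 /\ a <= H t <= bb /\ 0 <= N t <= 1) ->
  is_solution P X H N -> is_solution P x' h' n' ->
  x' 0 = X 0 -> h' 0 = H 0 -> n' 0 = N 0 ->
  forall T, 0 <= T -> x' T = X T /\ h' T = H T /\ n' T = N T.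
Proof.
  intros HP Ha Hbox [_ [rX [rH [rN dS1]]]] [_ [rx [rh [rn dS2]]]] E1 E2 E3 T HT.
  assert (Heta : 0 < eta P) by (destruct HP as [? [? [? [? [? [? [? [? [? [? [? [? [? [? [? [? [? ?]]]]]]]]]]]]]]]]]; auto).
  set (Kb := mkbox (-1) 2 (a/2) (bb+1) (-1/(2*eta P)) 2).
  assert (Kh : 0 < bhl Kb) by (simpl; lra).
  assert (Kn : 0 < 1 + eta P * bnl Kb) by (simpl; field_simplify; lra).
  destruct (LB_lip _ _ (LB_Fx P Kb HP Kh)) as [K1 [HK1 L1]].
  destruct (LB_lip _ _ (LB_Fh P Kb HP Kh Kn)) as [K2 [HK2 L2]].
  destruct (LB_lip _ _ (LB_Fn P Kb HP Kh)) as [K3 [HK3 L3]].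
  set (Lu := K1 + K2 + K3).
  set (kp := 6 * Lu).
  set (d := Rmin 1 (Rmin (a/2) (1/(2 * eta P)))).
  assert (Hd : 0 < d /\ d <= 1 /\ d <= a/2 /\ d <= 1/(2*eta P)).
  { unfold d. repeat split.
    - apply Rmin_pos; [lra| apply Rmin_pos; [lra| apply Rdiv_lt_0_compat; lra]].
    - apply Rmin_l.
    - eapply Rle_trans; [apply Rmin_r| apply Rmin_l].
    - eapply Rle_trans; [apply Rmin_r| apply Rmin_r]. }
  set (rho := d * d * exp (- (kp * T))).
  set (V := fun t => (X t - x' t) * (X t - x' t) + (H t - h' t) * (H t - h' t) + (N t - n' t) * (N t - n' t)).
  set (W := fun t => V t * exp (- (kp * t))).
  set (fX := fun t => Fx P (X t) (H t) (N t)). set (fH := fun t => Fh P (X t) (H t) (N t)).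
  set (fN := fun t => Defs.Fn P (X t) (H t) (N t)).
  set (gX := fun t => Fx P (x' t) (h' t) (n' t)). set (gH := fun t => Fh P (x' t) (h' t) (n' t)).
  set (gN := fun t => Defs.Fn P (x' t) (h' t) (n' t)).
  set (dV := fun t => 2 * (X t - x' t) * (fX t - gX t) + 2 * (H t - h' t) * (fH t - gH t) + 2 * (N t - n' t) * (fN t - gN t)).
  set (dW := fun t => dV t * exp (- (kp * t)) + V t * (- kp * exp (- (kp * t)))).
  set (dg := fun t => 2 * Rmax (rho - W t) 0 * dW t).
  assert (HV0 : V 0 = 0) by (unfold V; rewrite E1, E2, E3; ring).
  assert (HVpos : forall t, 0 <= V t) by (intros t; unfold V; cbv beta; pose proof (Rle_0_sqr (X t - x' t)); pose proof (Rle_0_sqr (H t - h' t)); pose proof (Rle_0_sqr (N t - n' t)); unfold Rsqr in *; lra).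
  assert (Hmono : qr rho (W T) <= qr rho (W 0)).
  { apply (mono_lemma (fun t => qr rho (W t)) dg T HT).
    - apply rc0_comp; [|apply qr_cont]. unfold W. apply rc0_mult.
      + unfold V. repeat apply rc0_plus; apply rc0_mult; apply rc0_minus; auto.
      + apply rc0_of_cont. apply derivable_continuous_pt. exists (- kp * exp (- (kp * 0))). apply dpl_expk.
    - intros t Ht. destruct (dS1 t Ht) as [D1 [D2 D3]]. destruct (dS2 t Ht) as [D4 [D5 D6]].
      unfold dg. apply dpl_comp; [|apply qr_der].
      apply (dpl_mult V (fun s => exp (- (kp * s)))); [|apply dpl_expk].
      unfold V. eapply dpl_eq.
      + apply dpl_plus. apply dpl_plus.
        apply dpl_mult; apply dpl_minus; eauto.
        apply dpl_mult; apply dpl_minus; eauto.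
        apply dpl_mult; apply dpl_minus; eauto.
      + unfold dV, fX, gX, fH, gH, fN, gN. ring.
    - intros t [Ht0 HtT]. unfold dg.
      destruct (Rle_dec (rho - W t) 0).
      + rewrite Rmax_right by lra. lra.
      + rewrite Rmax_left by lra.
        assert (Hex : 0 < exp (- (kp * t))) by apply exp_pos.
        assert (HVr : V t < d * d).
        { assert (HW : V t * exp (- (kp * t)) < d * d * exp (- (kp * T))) by (unfold W, rho in *; lra).
          assert (exp (- (kp * T)) <= exp (- (kp * t))).
          { assert (0 <= kp) by (unfold kp, Lu; lra).
            destruct (Req_dec (kp * T) (kp * t)) as [Ee|Ee]; [rewrite Ee; lra|].
            left; apply exp_increasing. nra. }
          assert (d * d * exp (- (kp * T)) <= d * d * exp (- (kp * t))).
          { apply Rmult_le_compat_l; nra. }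
          apply Rmult_lt_reg_r with (exp (- (kp * t))); lra. }
        destruct (Hbox t ltac:(lra)) as [Bx [Bh Bn]].
        unfold V in HVr; cbv beta in HVr.
        pose proof (Rle_0_sqr (X t - x' t)); pose proof (Rle_0_sqr (H t - h' t)); pose proof (Rle_0_sqr (N t - n' t)); unfold Rsqr in *.
        assert (ax : Rabs (X t - x' t) < d) by (apply sq_small; lra).
        assert (ah : Rabs (H t - h' t) < d) by (apply sq_small; lra).
        assert (an : Rabs (N t - n' t) < d) by (apply sq_small; lra).
        apply Rlt_le, abs_le_inv in ax. apply Rlt_le, abs_le_inv in ah. apply Rlt_le, abs_le_inv in an.
        assert (I1 : inB Kb (X t) (H t) (N t)).
        { unfold inB; simpl. assert (0 < 1 / (2 * eta P)) by (apply Rdiv_lt_0_compat; lra). lra. }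
        assert (I2 : inB Kb (x' t) (h' t) (n' t)).
        { unfold inB; simpl. assert (0 < 1 / (2 * eta P)) by (apply Rdiv_lt_0_compat; lra). lra. }
        set (sd := dist3 (X t) (H t) (N t) (x' t) (h' t) (n' t)).
        assert (Hsd : 0 <= sd) by apply dist3_pos.
        assert (F1 : Rabs (fX t - gX t) <= Lu * sd).
        { eapply Rle_trans. apply L1; auto. apply Rmult_le_compat_r; auto. unfold Lu; lra. }
        assert (F2 : Rabs (fH t - gH t) <= Lu * sd).
        { eapply Rle_trans. apply L2; auto. apply Rmult_le_compat_r; auto. unfold Lu; lra. }
        assert (F3 : Rabs (fN t - gN t) <= Lu * sd).
        { eapply Rle_trans. apply L3; auto. apply Rmult_le_compat_r; auto. unfold Lu; lra. }
        assert (prodb : forall u v, Rabs v <= Lu * sd -> u * v <= Rabs u * (Lu * sd)).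
        { intros u v Hv. eapply Rle_trans. apply RRle_abs. rewrite Rabs_mult.
          apply Rmult_le_compat_l; auto. apply Rabs_pos. }
        pose proof (prodb (X t - x' t) _ F1) as P1. pose proof (prodb (H t - h' t) _ F2) as P2. pose proof (prodb (N t - n' t) _ F3) as P3.
        assert (HdV : dV t <= 2 * Lu * (sd * sd)).
        { unfold dV. unfold sd, dist3. 
          replace (2 * Lu * ((Rabs (X t - x' t) + Rabs (H t - h' t) + Rabs (N t - n' t)) *
                  (Rabs (X t - x' t) + Rabs (H t - h' t) + Rabs (N t - n' t)))) with
            (2 * (Rabs (X t - x' t) * (Lu * sd) + Rabs (H t - h' t) * (Lu * sd) + Rabs (N t - n' t) * (Lu * sd))) by (unfold sd, dist3; ring).
          lra. }
        assert (Hs3 : sd * sd <= 3 * V t).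
        { unfold V, sd, dist3. 
          assert (q1 : Rabs (X t - x' t) * Rabs (X t - x' t) = (X t - x' t) * (X t - x' t)) by (rewrite <- Rabs_mult; apply Rabs_right; nra).
          assert (q2 : Rabs (H t - h' t) * Rabs (H t - h' t) = (H t - h' t) * (H t - h' t)) by (rewrite <- Rabs_mult; apply Rabs_right; nra).
          assert (q3 : Rabs (N t - n' t) * Rabs (N t - n' t) = (N t - n' t) * (N t - n' t)) by (rewrite <- Rabs_mult; apply Rabs_right; nra).
          rewrite <- q1, <- q2, <- q3.
          pose proof (Rle_0_sqr (Rabs (X t - x' t) - Rabs (H t - h' t))).
          pose proof (Rle_0_sqr (Rabs (X t - x' t) - Rabs (N t - n' t))).
          pose proof (Rle_0_sqr (Rabs (H t - h' t) - Rabs (N t - n' t))). unfold Rsqr in *. nra. }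
        assert (HLu : 0 <= Lu) by (unfold Lu; lra).
        assert (dV t - kp * V t <= 0) by (unfold kp; nra).
        assert (dW t <= 0) by (unfold dW; nra).
        assert (0 <= rho - W t) by lra. nra.
  }
  unfold W at 2 in Hmono. rewrite HV0, Rmult_0_l in Hmono.
  unfold qr at 2 in Hmono. rewrite Rmin_left in Hmono by (unfold rho; pose proof (exp_pos (- (kp * T))); nra).
  assert (HWT : 0 <= W T) by (unfold W; pose proof (HVpos T); pose proof (exp_pos (- (kp * T))); nra).
  assert (Hrho : 0 < rho) by (unfold rho; apply Rmult_lt_0_compat; [destruct Hd; nra| apply exp_pos]).
  assert (WT0 : W T = 0).
  { destruct (Req_dec (W T) 0); auto. exfalso. unfold qr in Hmono.
    unfold Rmin in Hmono. destruct (Rle_dec (W T) rho); nra. }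
  unfold W in WT0. apply Rmult_integral in WT0. destruct WT0 as [VT|EE]; [|pose proof (exp_pos (- (kp * T))); lra].
  unfold V in VT.
  pose proof (Rle_0_sqr (X T - x' T)); pose proof (Rle_0_sqr (H T - h' T)); pose proof (Rle_0_sqr (N T - n' T)); unfold Rsqr in *.
  split; [|split]; nra.
Qed.


Definition cl lo hi v := Rmax lo (Rmin hi v).

Lemma cl_in lo hi v : lo <= hi -> lo <= cl lo hi v <= hi.
Proof. intros. unfold cl, Rmax, Rmin. destruct (Rle_dec hi v); destruct (Rle_dec lo _); lra. Qed.
Lemma cl_lip lo hi u v : lo <= hi -> Rabs (cl lo hi u - cl lo hi v) <= Rabs (u - v).
Proof.
  intros. unfold cl, Rmax, Rmin.
  destruct (Rle_dec hi u); destruct (Rle_dec hi v); repeat destruct (Rle_dec lo _);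
  unfold Rabs; repeat destruct (Rcase_abs _); lra.
Qed.
Lemma cl_id lo hi v : lo <= v <= hi -> cl lo hi v = v.
Proof. intros. unfold cl, Rmax, Rmin. destruct (Rle_dec hi v); destruct (Rle_dec lo _); lra. Qed.
Lemma cl_lo lo hi v : lo <= hi -> v < lo -> cl lo hi v = lo.
Proof. intros. unfold cl, Rmax, Rmin. destruct (Rle_dec hi v); destruct (Rle_dec lo _); lra. Qed.
Lemma cl_hi lo hi v : lo <= hi -> hi < v -> cl lo hi v = hi.
Proof. intros. unfold cl, Rmax, Rmin. destruct (Rle_dec hi v); destruct (Rle_dec lo _); lra. Qed.

Section Signs.
Variable P : params.
Hypothesis HP : params_ok P.

Lemma Fx0 h n : 0 <= Fx P 0 h n.
Proof.
  destruct HP as [? [? [? [? [? [? [? [? [? [? ?]]]]]]]]]].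
  unfold Fx, mu. pose proof (Rpower_pos h (p P)). nra.
Qed.
Lemma Fx1 h n : Fx P 1 h n <= 0.
Proof.
  destruct HP as [? [? [? [? [? [? [? [? [? [? [? ?]]]]]]]]]]].
  unfold Fx. nra.
Qed.
Lemma Fn0 x h : 0 <= Defs.Fn P x h 0.
Proof. unfold Defs.Fn. lra. Qed.
Lemma dS_nonneg h : 0 <= dS P h.
Proof.
  destruct HP as [? [? [? [? [? [? [? ?]]]]]]].
  unfold dS. pose proof (Rpower_pos h (m P)). pose proof (Rpower_pos (h50 P) (m P)).
  apply Rmult_le_pos. nra. left; apply Rinv_0_lt_compat; lra.
Qed.
Lemma Fn1 x h : 0 <= x <= 1 -> Defs.Fn P x h 1 <= 0.
Proof.
  intros Hx. pose proof (dS_nonneg h).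
  destruct HP as [? [? [? [? [? [? ?]]]]]].
  assert (phi P * x <= 1) by nra.
  unfold Defs.Fn, Dfun. assert (0 <= (1 - phi P * x) * dS P h) by (apply Rmult_le_pos; lra). lra.
Qed.
Lemma Fh_lo x a n : 0 <= x <= 1 -> 0 <= n <= 1 -> 0 < a <= 1 -> 0 <= Fh P x a n.
Proof.
  intros Hx Hn Ha.
  destruct HP as [? [? [? [? [? [? [? [? [? [? [? [? [Hal [Hbe [HKg [Hg [Het ?]]]]]]]]]]]]]]]]].
  unfold Fh, Gfun, Gam.
  assert (0 < Kg P / (Kg P + a)) by (apply Rdiv_lt_0_compat; lra).
  assert (0 < gamma0 P / (1 + eta P * n)) by (apply Rdiv_lt_0_compat; nra).
  assert (0 <= alpha P * n * (1 + beta P * x)) by (apply Rmult_le_pos; nra).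
  nra.
Qed.
Lemma Fh_hi x b n : 0 <= x <= 1 -> 0 <= n <= 1 ->
  1 + alpha P * (1 + beta P) * (1 + eta P) / gamma0 P <= b -> Fh P x b n <= 0.
Proof.
  intros Hx Hn Hb.
  destruct HP as [? [? [? [? [? [? [? [? [? [? [? [? [Hal [Hbe [HKg [Hg [Het ?]]]]]]]]]]]]]]]]].
  assert (HA : 0 <= alpha P * (1 + beta P) * (1 + eta P) / gamma0 P).
  { apply Rmult_le_pos. apply Rmult_le_pos; [apply Rmult_le_pos|]; lra. left; apply Rinv_0_lt_compat; lra. }
  unfold Fh, Gfun, Gam.
  assert (Kg P / (Kg P + b) <= 1).
  { unfold Rdiv. apply Rmult_le_reg_r with (Kg P + b). lra. rewrite Rmult_assoc, Rinv_l by lra. lra. }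
  assert (0 < Kg P / (Kg P + b)) by (apply Rdiv_lt_0_compat; lra).
  assert (T1 : alpha P * n * (1 + beta P * x) * (Kg P / (Kg P + b)) <= alpha P * (1 + beta P)).
  { assert (beta P * x <= beta P) by nra. assert (0 <= beta P * x) by nra.
    assert (n * (1 + beta P * x) <= 1 + beta P) by nra.
    assert (0 <= alpha P * n * (1 + beta P * x)) by (apply Rmult_le_pos; nra).
    apply Rle_trans with (alpha P * n * (1 + beta P * x)).
    rewrite <- (Rmult_1_r (alpha P * n * (1 + beta P * x))) at 2. apply Rmult_le_compat_l; lra.
    rewrite Rmult_assoc. apply Rmult_le_compat_l; lra. }
  assert (T2 : gamma0 P / (1 + eta P) <= gamma0 P / (1 + eta P * n)).
  { unfold Rdiv. apply Rmult_le_compat_l. lra. apply Rinv_le_contravar; nra. }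
  assert (T3 : gamma0 P / (1 + eta P) * (alpha P * (1 + beta P) * (1 + eta P) / gamma0 P) = alpha P * (1 + beta P)).
  { field. lra. }
  assert (gamma0 P / (1 + eta P) * (alpha P * (1 + beta P) * (1 + eta P) / gamma0 P) <= gamma0 P / (1 + eta P * n) * (b - 1)).
  { apply Rmult_le_compat; try lra. left; apply Rdiv_lt_0_compat; lra. }
  lra.
Qed.
End Signs.

Lemma LB_get b f : LB b f -> exists K B, 0 <= K /\ 0 <= B /\ forall x h n x' h' n', inB b x h n -> inB b x' h' n' ->
    Rabs (f x h n) <= B /\ Rabs (f x h n - f x' h' n') <= K * dist3 x h n x' h' n'.
Proof. auto. Qed.

Theorem theorem1 (P : params) (x0 h0 n0 : R) :
  params_ok P -> inD x0 h0 n0 ->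
  exists x h n : R -> R,
    is_solution P x h n /\ x 0 = x0 /\ h 0 = h0 /\ n 0 = n0 /\
    (forall t, 0 <= t -> inD (x t) (h t) (n t)) /\
    (forall x' h' n' : R -> R,
       is_solution P x' h' n' -> x' 0 = x0 -> h' 0 = h0 -> n' 0 = n0 ->
       forall t, 0 <= t -> x' t = x t /\ h' t = h t /\ n' t = n t).
Proof.
  intros HP [Hx0 [Hh0 Hn0]].
  set (a := Rmin h0 1).
  set (bb := Rmax h0 (1 + alpha P * (1 + beta P) * (1 + eta P) / gamma0 P)).
  assert (Ha : 0 < a /\ a <= 1 /\ a <= h0) by (unfold a; split; [apply Rmin_pos; lra| split; [apply Rmin_r| apply Rmin_l]]).
  assert (Hb : h0 <= bb /\ 1 + alpha P * (1 + beta P) * (1 + eta P) / gamma0 P <= bb) by (unfold bb; split; [apply Rmax_l| apply Rmax_r]).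
  assert (Hab : a <= bb) by lra.
  set (B := mkbox 0 1 a bb 0 1).
  assert (HBh : 0 < bhl B) by (simpl; lra).
  destruct (LB_get _ _ (LB_Fx P B HP HBh)) as [K1 [B1 [HK1 [HB1 L1]]]].
  assert (HBn : 0 < 1 + eta P * bnl B) by (simpl; lra).
  destruct (LB_get _ _ (LB_Fh P B HP HBh HBn)) as [K2 [B2 [HK2 [HB2 L2]]]].
  destruct (LB_get _ _ (LB_Fn P B HP HBh)) as [K3 [B3 [HK3 [HB3 L3]]]].
  set (G := fun (i : nat) => match i with
       | O => fun x h n => Fx P (cl 0 1 x) (cl a bb h) (cl 0 1 n)
       | 1%nat => fun x h n => Fh P (cl 0 1 x) (cl a bb h) (cl 0 1 n)
       | _ => fun x h n => Defs.Fn P (cl 0 1 x) (cl a bb h) (cl 0 1 n) end).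
  set (y0 := fun (i : nat) => match i with O => x0 | 1%nat => h0 | _ => n0 end).
  assert (inBc : forall x h n, inB B (cl 0 1 x) (cl a bb h) (cl 0 1 n)).
  { intros. unfold inB; simpl. split; [|split]; apply cl_in; lra. }
  assert (dc : forall x h n x' h' n', dist3 (cl 0 1 x) (cl a bb h) (cl 0 1 n) (cl 0 1 x') (cl a bb h') (cl 0 1 n')
                 <= Rabs (x - x') + Rabs (h - h') + Rabs (n - n')).
  { intros. unfold dist3. pose proof (cl_lip 0 1 x x' ltac:(lra)). pose proof (cl_lip a bb h h' Hab).
    pose proof (cl_lip 0 1 n n' ltac:(lra)). lra. }
  assert (Glip : forall i a0 b c a' b' c', Rabs (G i a0 b c - G i a' b' c') <= (K1 + K2 + K3 + 1) * (Rabs (a0 - a') + Rabs (b - b') + Rabs (c - c'))).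
  { intros i a0 b0 c0 a' b' c'. 
    pose proof (dc a0 b0 c0 a' b' c'). pose proof (dist3_pos (cl 0 1 a0) (cl a bb b0) (cl 0 1 c0) (cl 0 1 a') (cl a bb b') (cl 0 1 c')).
    pose proof (Rabs_pos (a0 - a')). pose proof (Rabs_pos (b0 - b')). pose proof (Rabs_pos (c0 - c')).
    destruct i as [|[|i]]; simpl.
    - eapply Rle_trans. apply L1; apply inBc. nra.
    - eapply Rle_trans. apply L2; apply inBc. nra.
    - eapply Rle_trans. apply L3; apply inBc. nra. }
  assert (Gbd : forall i a0 b c, Rabs (G i a0 b c) <= B1 + B2 + B3).
  { intros i a0 b0 c0. destruct i as [|[|i]]; simpl.
    - destruct (L1 _ _ _ _ _ _ (inBc a0 b0 c0) (inBc a0 b0 c0)). lra.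
    - destruct (L2 _ _ _ _ _ _ (inBc a0 b0 c0) (inBc a0 b0 c0)). lra.
    - destruct (L3 _ _ _ _ _ _ (inBc a0 b0 c0) (inBc a0 b0 c0)). lra. }
  destruct (picard_exists G (K1 + K2 + K3 + 1) (B1 + B2 + B3) y0 ltac:(lra) ltac:(lra) Glip Gbd) as [Y [Y0 [YL YD]]].
  assert (rc : forall i, right_cont0 (Y i)) by (intros; eapply lip_rc0; apply YL).
  assert (D0 : forall t, 0 < t -> derivable_pt_lim (Y 0%nat) t (Fx P (cl 0 1 (Y 0%nat t)) (cl a bb (Y 1%nat t)) (cl 0 1 (Y 2%nat t))))
    by (intros; apply (YD 0%nat t); auto).
  assert (D1 : forall t, 0 < t -> derivable_pt_lim (Y 1%nat) t (Fh P (cl 0 1 (Y 0%nat t)) (cl a bb (Y 1%nat t)) (cl 0 1 (Y 2%nat t))))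
    by (intros; apply (YD 1%nat t); auto).
  assert (D2 : forall t, 0 < t -> derivable_pt_lim (Y 2%nat) t (Defs.Fn P (cl 0 1 (Y 0%nat t)) (cl a bb (Y 1%nat t)) (cl 0 1 (Y 2%nat t))))
    by (intros; apply (YD 2%nat t); auto).
  assert (Y00 : Y 0%nat 0 = x0) by (apply (Y0 0%nat); auto).
  assert (Y10 : Y 1%nat 0 = h0) by (apply (Y0 1%nat); auto).
  assert (Y20 : Y 2%nat 0 = n0) by (apply (Y0 2%nat); auto).
  assert (cx : forall t, 0 <= cl 0 1 (Y 0%nat t) <= 1) by (intros; apply cl_in; lra).
  assert (cn : forall t, 0 <= cl 0 1 (Y 2%nat t) <= 1) by (intros; apply cl_in; lra).
  assert (Xlo : forall t, 0 <= t -> 0 <= Y 0%nat t).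
  { apply (inv_lo _ _ 0 (rc 0%nat) ltac:(lra) D0). intros t Ht Hl.
    rewrite (cl_lo 0 1) by lra. apply Fx0; auto. }
  assert (Xhi : forall t, 0 <= t -> Y 0%nat t <= 1).
  { apply (inv_hi _ _ 1 (rc 0%nat) ltac:(lra) D0). intros t Ht Hl.
    rewrite (cl_hi 0 1) by lra. apply Fx1; auto. }
  assert (Nlo : forall t, 0 <= t -> 0 <= Y 2%nat t).
  { apply (inv_lo _ _ 0 (rc 2%nat) ltac:(lra) D2). intros t Ht Hl.
    rewrite (cl_lo 0 1 (Y 2%nat t)) by lra. apply Fn0. }
  assert (Nhi : forall t, 0 <= t -> Y 2%nat t <= 1).
  { apply (inv_hi _ _ 1 (rc 2%nat) ltac:(lra) D2). intros t Ht Hl.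
    rewrite (cl_hi 0 1 (Y 2%nat t)) by lra. apply Fn1; auto. }
  assert (Hlo : forall t, 0 <= t -> a <= Y 1%nat t).
  { apply (inv_lo _ _ a (rc 1%nat) ltac:(lra) D1). intros t Ht Hl.
    rewrite (cl_lo a bb) by lra. apply Fh_lo; auto; lra. }
  assert (Hhi : forall t, 0 <= t -> Y 1%nat t <= bb).
  { apply (inv_hi _ _ bb (rc 1%nat) ltac:(lra) D1). intros t Ht Hl.
    rewrite (cl_hi a bb) by lra. apply Fh_hi; auto; lra. }
  assert (Sol : is_solution P (Y 0%nat) (Y 1%nat) (Y 2%nat)).
  { split; [intros t Ht; pose proof (Hlo t Ht); lra|].
    split; [auto|]. split; [auto|]. split; [auto|].
    intros t Ht.
    assert (e1 : cl 0 1 (Y 0%nat t) = Y 0%nat t) by (apply cl_id; split; [apply Xlo| apply Xhi]; lra).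
    assert (e2 : cl a bb (Y 1%nat t) = Y 1%nat t) by (apply cl_id; split; [apply Hlo| apply Hhi]; lra).
    assert (e3 : cl 0 1 (Y 2%nat t) = Y 2%nat t) by (apply cl_id; split; [apply Nlo| apply Nhi]; lra).
    pose proof (D0 t Ht) as d0. pose proof (D1 t Ht) as d1. pose proof (D2 t Ht) as d2.
    rewrite e1, e2, e3 in d0, d1, d2. auto. }
  exists (Y 0%nat), (Y 1%nat), (Y 2%nat).
  split; [auto|]. split; [auto|]. split; [auto|]. split; [auto|]. split.
  - intros t Ht. unfold inD. pose proof (Hlo t Ht).
    split; [split; [apply Xlo| apply Xhi]; auto|]. split; [lra|]. split; [apply Nlo| apply Nhi]; auto.
  - intros x' h' n' Hs E1 E2 E3 t Ht.
    assert (Hbx : forall s, 0 <= s -> 0 <= Y 0%nat s <= 1 /\ a <= Y 1%nat s <= bb /\ 0 <= Y 2%nat s <= 1).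
    { intros s Hs'. split; [split; [apply Xlo| apply Xhi]; auto|]. split; [split; [apply Hlo| apply Hhi]; auto|].
      split; [apply Nlo| apply Nhi]; auto. }
    apply (uniq_lemma P (Y 0%nat) (Y 1%nat) (Y 2%nat) x' h' n' a bb HP ltac:(lra) Hbx Sol Hs); auto; congruence.
Qed.
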